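(* Consider the system $$\dot x=-y+x(x^3+xy^2)+\sum_{k=1}^2\varepsilon^k\Big(\lambda_kx+\sum_{i+j=4}a_{k,i,j}x^iy^j\Big),\qquad \dot y=x+y(x^3+xy^2)+\sum_{k=1}^2\varepsilon^k\Big(\lambda_ky+\sum_{i+j=4}b_{k,i,j}x^iy^j\Big)$$ with real coefficients. Then the unperturbed equation is $dr/d\theta=r^4\cos\theta$, with solution $r(\theta,z)=z(1-3z^3\sin\theta)^{-1/3}$ for $r(0)=z$, periodic and positive for $z\in D=(0,3^{-1/3})$, and the first order averaged function $f_1$, after the substitution $z=\big[\frac{1-s^2}{3(1+s^2)}\big]^{1/3}$ with $s\in(0,1)$ (a bijection onto $D$), equals $$\frac{\pi\,3^{2/3}(1-s)^{1/3}}{108(1+s)^{11/3}(1+s^2)^{4/3}}\big(N_1s^6+N_2s^5+N_3s^4+N_4s^3+N_3s^2+N_2s+N_1\big),$$ where $N_1=3a_{1,1,3}+a_{1,3,1}-3b_{1,0,4}-b_{1,2,2}-3b_{1,4,0}+72\lambda_1$, $N_2=-4a_{1,1,3}+4b_{1,0,4}+4a_{1,3,1}-4b_{1,2,2}-12b_{1,4,0}+288\lambda_1$, $N_3=5a_{1,1,3}-9a_{1,3,1}-5b_{1,0,4}+9b_{1,2,2}-5b_{1,4,0}+504\lambda_1$, $N_4=-8a_{1,1,3}+8a_{1,3,1}+8b_{1,0,4}-8b_{1,2,2}+40b_{1,4,0}+576\lambda_1$.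
   Context: Averaging framework (first order): in polar coordinates $x=r\cos\theta,y=r\sin\theta$, write $dr/d\theta=F_0(\theta,r)+\varepsilon F_1(\theta,r)+\varepsilon^2F_2(\theta,r)+O(\varepsilon^3)$; let $r(\theta,z)$ solve $dr/d\theta=F_0$ with $r(0,z)=z$ and $Y(\theta,z)$ solve $Y'=\partial_rF_0(\theta,r(\theta,z))Y$, $Y(0,z)=1$ (here $Y=(1-3z^3\sin\theta)^{-4/3}$). The first order averaged function is $f_1(z)=Y(2\pi,z)\int_0^{2\pi}Y(s,z)^{-1}F_1(s,r(s,z))\,ds$. *)

(* Defs.v *)
From Stdlib Require Import Reals.
From Coquelicot Require Import Coquelicot.
Open Scope R_scope.

(* Coefficients: a k i j = a_{k,i,j}, b k i j = b_{k,i,j}, lam k = lambda_k. *)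

Definition quart (c : nat -> nat -> nat -> R) (k : nat) (x y : R) : R :=
  sum_f_R0 (fun i => c k i (4 - i)%nat * x ^ i * y ^ (4 - i)) 4.

Definition Pf (a : nat -> nat -> nat -> R) (lam : nat -> R) (eps x y : R) : R :=
  - y + x * (x ^ 3 + x * y ^ 2)
  + eps * (lam 1%nat * x + quart a 1 x y)
  + eps ^ 2 * (lam 2%nat * x + quart a 2 x y).

Definition Qf (b : nat -> nat -> nat -> R) (lam : nat -> R) (eps x y : R) : R :=
  x + y * (x ^ 3 + x * y ^ 2)
  + eps * (lam 1%nat * y + quart b 1 x y)
  + eps ^ 2 * (lam 2%nat * y + quart b 2 x y).

(* dr/dtheta in polar coordinates x = r cos th, y = r sin th (r > 0):
   rdot = (x P + y Q)/r, thetadot = (x Q - y P)/r^2, so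
   dr/dtheta = r (cos th P + sin th Q) / (cos th Q - sin th P). *)
Definition drdth (a b : nat -> nat -> nat -> R) (lam : nat -> R) (eps th r : R) : R :=
  let x := r * cos th in
  let y := r * sin th in
  let P := Pf a lam eps x y in
  let Q := Qf b lam eps x y in
  r * (cos th * P + sin th * Q) / (cos th * Q - sin th * P).

Definition F0 a b lam (th r : R) : R := drdth a b lam 0 th r.
Definition F1 a b lam (th r : R) : R := Derive (fun e => drdth a b lam e th r) 0.

Definition rsol (th z : R) : R := z * Rpower (1 - 3 * z ^ 3 * sin th) (- (1 / 3)).

(* Solution of the variational equation, as given in the context. *)
Definition Ysol (th z : R) : R := Rpower (1 - 3 * z ^ 3 * sin th) (- (4 / 3)).

Definition f1 a b lam (z : R) : R :=
  Ysol (2 * PI) z *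
  RInt (fun s => / Ysol s z * F1 a b lam s (rsol s z)) 0 (2 * PI).

Definition zmax : R := Rpower 3 (- (1 / 3)).

Definition zofs (s : R) : R := Rpower ((1 - s ^ 2) / (3 * (1 + s ^ 2))) (1 / 3).

Definition N1 (a b : nat -> nat -> nat -> R) (lam : nat -> R) : R :=
  3 * a 1%nat 1%nat 3%nat + a 1%nat 3%nat 1%nat - 3 * b 1%nat 0%nat 4%nat
  - b 1%nat 2%nat 2%nat - 3 * b 1%nat 4%nat 0%nat + 72 * lam 1%nat.
Definition N2 (a b : nat -> nat -> nat -> R) (lam : nat -> R) : R :=
  - 4 * a 1%nat 1%nat 3%nat + 4 * b 1%nat 0%nat 4%nat + 4 * a 1%nat 3%nat 1%nat
  - 4 * b 1%nat 2%nat 2%nat - 12 * b 1%nat 4%nat 0%nat + 288 * lam 1%nat.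
Definition N3 (a b : nat -> nat -> nat -> R) (lam : nat -> R) : R :=
  5 * a 1%nat 1%nat 3%nat - 9 * a 1%nat 3%nat 1%nat - 5 * b 1%nat 0%nat 4%nat
  + 9 * b 1%nat 2%nat 2%nat - 5 * b 1%nat 4%nat 0%nat + 504 * lam 1%nat.
Definition N4 (a b : nat -> nat -> nat -> R) (lam : nat -> R) : R :=
  - 8 * a 1%nat 1%nat 3%nat + 8 * a 1%nat 3%nat 1%nat + 8 * b 1%nat 0%nat 4%nat
  - 8 * b 1%nat 2%nat 2%nat + 40 * b 1%nat 4%nat 0%nat + 576 * lam 1%nat.

(* Main.v *)
Require Import Defs.
From Stdlib Require Import Reals Lra Lia Psatz.
From Coquelicot Require Import Coquelicot.
Open Scope R_scope.

Lemma w_pos (k t : R) : 0 <= k < 1 -> 0 < 1 - k * sin t.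
Proof. intros [h1 h2]. pose proof (SIN_bound t). nra. Qed.

Lemma sc1 (x : R) : sin x ^ 2 + cos x ^ 2 = 1.
Proof. pose proof (sin2_cos2 x) as H. unfold Rsqr in H. nra. Qed.

Lemma odd_zero (j q : nat) (k : R) : 0 <= k < 1 ->
  is_RInt (fun t => cos t ^ (2*j+1) * sin t ^ q / (1 - k * sin t)) 0 (2*PI) 0.
Proof.
  intros hk.
  set (f := fun u : R => (1 - u^2)^j * u^q / (1 - k*u)).
  assert (H := is_RInt_comp f sin cos 0 (2*PI)).
  rewrite sin_0, sin_2PI, RInt_point in H.
  eapply is_RInt_ext; [| apply H].
  - intros x _.
    assert (E: cos x ^ (2*j+1) = cos x * (1 - sin x ^ 2)^j).
    { rewrite pow_add, pow_mult. replace (1 - sin x ^2) with (cos x ^2). ring.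
      pose proof (sc1 x); lra. }
    rewrite E. unfold f, scal; simpl; unfold mult; simpl.
    field. pose proof (w_pos k x hk); lra.
  - intros x _. apply (ex_derive_continuous (K:=R_AbsRing) (V:=R_NormedModule)). unfold f. auto_derive.
    pose proof (SIN_bound x). nra.
  - intros x _. split. apply is_derive_sin. 
    apply (ex_derive_continuous (K:=R_AbsRing) (V:=R_NormedModule)). auto_derive. auto.
Qed.

Lemma is_RInt_val (f : R -> R) a b l l' : is_RInt f a b l -> l = l' -> is_RInt f a b l'.
Proof. intros H ->; exact H. Qed.

Lemma Sstep (n : nat) (V : R) : is_RInt (fun t => sin t ^ n) 0 (2*PI) V ->
  is_RInt (fun t => sin t ^ (S (S n))) 0 (2*PI) (INR (S n) / INR (S (S n)) * V).
Proof.
  intros H.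
  set (F := fun t => sin t ^ (S n) * cos t).
  assert (H1 : is_RInt (fun t => INR (S n) * sin t ^ n - INR (S (S n)) * sin t ^ (S (S n))) 0 (2*PI) 0).
  { eapply is_RInt_val.
    eapply is_RInt_ext; [| apply (is_RInt_derive F (fun t => INR (S n) * sin t ^ n * cos t * cos t - sin t ^ (S n) * sin t))].
    - intros x _. pose proof (sc1 x). rewrite !S_INR. simpl.
      assert (Hc : cos x * cos x = 1 - sin x * sin x) by nra.
      transitivity ((INR n+1)*sin x^n*(cos x*cos x) - sin x*sin x^n*sin x); [ring|].
      rewrite Hc; ring.
    - intros x _. unfold F. auto_derive. auto. destruct n; simpl; ring.
    - intros x _. apply (ex_derive_continuous (K:=R_AbsRing) (V:=R_NormedModule)). auto_derive. auto.
    - unfold F, minus, plus, opp; simpl. rewrite sin_0, sin_2PI. ring. }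
  assert (Hn : INR (S (S n)) <> 0) by (apply not_0_INR; lia).
  
  assert (H2 := is_RInt_minus _ _ _ _ _ _ (is_RInt_scal _ _ _ (INR (S n)) _ H) H1).
  
  assert (H3 := is_RInt_scal _ _ _ (/ INR (S (S n))) _ H2).
  refine (is_RInt_val _ _ _ _ _ (is_RInt_ext _ _ _ _ _ _ H3) _).
  - intros x _. rewrite !S_INR in *. unfold scal, minus, plus, opp; simpl; unfold mult; simpl. field. exact Hn.
  - rewrite !S_INR in *. unfold scal, minus, plus, opp; simpl; unfold mult; simpl. field. exact Hn.
Qed.

Lemma ext_R (f g : R -> R) (a b l : R) : (forall x : R, f x = g x) -> is_RInt f a b l -> is_RInt g a b l.
Proof. intros H1 H2. apply (is_RInt_ext f g a b l); [intros; apply H1 | exact H2]. Qed.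

Lemma S0 : is_RInt (fun t => sin t ^ 0) 0 (2*PI) (2*PI).
Proof.
  eapply is_RInt_val. apply (ext_R (fun _ => 1)). intros; simpl; ring.
  apply is_RInt_const. unfold scal; simpl; unfold mult; simpl. ring.
Qed.

Lemma S1 : is_RInt (fun t => sin t ^ 1) 0 (2*PI) 0.
Proof.
  eapply is_RInt_val. apply (ext_R (fun t => sin t)). intros; simpl; ring.
  apply (is_RInt_derive (fun t => - cos t)).
  - intros x _. auto_derive. auto. ring.
  - intros x _. apply (ex_derive_continuous (K:=R_AbsRing) (V:=R_NormedModule)). auto_derive. auto.
  - unfold minus, plus, opp; simpl. rewrite cos_0, cos_2PI. ring.
Qed.

Lemma Dstep (n : nat) (k V W : R) : 0 < k < 1 ->
  is_RInt (fun t => sin t ^ n / (1 - k * sin t)) 0 (2*PI) V ->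
  is_RInt (fun t => sin t ^ n) 0 (2*PI) W ->
  is_RInt (fun t => sin t ^ (S n) / (1 - k * sin t)) 0 (2*PI) ((V - W)/k).
Proof.
  intros hk HV HW.
  assert (H2 := is_RInt_minus _ _ _ _ _ _ HV HW).
  assert (H3 := is_RInt_scal _ _ _ (/ k) _ H2).
  refine (is_RInt_val _ _ _ _ _ (is_RInt_ext _ _ _ _ _ _ H3) _).
  - intros x _. pose proof (w_pos k x ltac:(lra)).
    unfold scal, minus, plus, opp; simpl; unfold mult; simpl. field. lra.
  - unfold scal, minus, plus, opp; simpl; unfold mult; simpl. field. lra.
Qed.

Lemma D0 (rho : R) : 0 < rho < 1 ->
  is_RInt (fun t => sin t ^ 0 / (1 - (2*rho/(1+rho^2)) * sin t)) 0 (2*PI)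
    (2*PI*(1+rho^2)/(1-rho^2)).
Proof.
  intros hr.
  set (G := fun t => t + 2 * atan (- rho * cos t / (1 - rho * sin t))).
  assert (Hd : forall t, 0 < 1 - rho * sin t) by (intro t; pose proof (SIN_bound t); nra).
  assert (Hd2 : forall t, 0 < 1 - 2*rho*sin t + rho^2) by (intro t; pose proof (SIN_bound t); nra).
  assert (H1 := is_RInt_derive G (fun t => (1 - rho^2)/(1 - 2*rho*sin t + rho^2)) 0 (2*PI)).
  assert (Ha : forall x : R, Rmin 0 (2 * PI) <= x <= Rmax 0 (2 * PI) ->
   is_derive G x ((fun t : R => (1 - rho ^ 2) / (1 - 2 * rho * sin t + rho ^ 2)) x)).
  { intros x _. unfold G. auto_derive. pose proof (Hd x); lra.
    pose proof (Hd x); pose proof (Hd2 x). pose proof (sc1 x).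
    field_simplify; [ | lra | ].
    + replace (cos x ^2) with (1 - sin x^2) by lra. field. nra.
    + split. lra. nra. }
  assert (Hb : forall x : R, Rmin 0 (2 * PI) <= x <= Rmax 0 (2 * PI) ->
   continuous (fun t : R => (1 - rho ^ 2) / (1 - 2 * rho * sin t + rho ^ 2)) x).
  { intros x _. apply (ex_derive_continuous (K:=R_AbsRing) (V:=R_NormedModule)). auto_derive.
    pose proof (Hd2 x); lra. }
  assert (H3 := is_RInt_scal _ _ _ ((1+rho^2)/(1-rho^2)) _ (H1 Ha Hb)).
  refine (is_RInt_val _ _ _ _ _ (is_RInt_ext _ _ _ _ _ _ H3) _).
  - intros x _. pose proof (Hd2 x).
    unfold scal; simpl; unfold mult; simpl. field. split; nra.
  - unfold G, scal, minus, plus, opp; simpl; unfold mult; simpl.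
    rewrite sin_0, sin_2PI, cos_0, cos_2PI. field. nra.
Qed.

Fixpoint Sv (n : nat) : R :=
  match n with
  | O => 2*PI
  | S O => 0
  | S (S m as p) => INR p / INR (S p) * Sv m
  end.

Lemma Sv_ok (n : nat) : is_RInt (fun t => sin t ^ n) 0 (2*PI) (Sv n)
                     /\ is_RInt (fun t => sin t ^ (S n)) 0 (2*PI) (Sv (S n)).
Proof.
  induction n as [|n [IH1 IH2]].
  - split. exact S0. exact S1.
  - split. exact IH2.
    pose proof (Sstep n (Sv n) IH1) as H. exact H.
Qed.

Definition kk (rho : R) : R := 2*rho/(1+rho^2).

Fixpoint Dv (rho : R) (n : nat) : R :=
  match n with
  | O => 2*PI*(1+rho^2)/(1-rho^2)
  | S m => (Dv rho m - Sv m) / kk rho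
  end.

Lemma kk_bound (rho : R) : 0 < rho < 1 -> 0 < kk rho < 1.
Proof. intros h. unfold kk. split.
  apply Rdiv_lt_0_compat; nra. apply Rmult_lt_reg_r with (1+rho^2). nra.
  unfold Rdiv. rewrite Rmult_assoc, Rinv_l by nra. nra. Qed.

Lemma Dv_ok (rho : R) (n : nat) : 0 < rho < 1 ->
  is_RInt (fun t => sin t ^ n / (1 - kk rho * sin t)) 0 (2*PI) (Dv rho n).
Proof.
  intros hr. induction n as [|n IH].
  - exact (D0 rho hr).
  - pose proof (Dstep n (kk rho) _ _ (kk_bound rho hr) IH (proj1 (Sv_ok n))) as H. exact H.
Qed.

Lemma lin (f g : R -> R) (a b Vf Vg al be : R) :
  is_RInt f a b Vf -> is_RInt g a b Vg ->
  is_RInt (fun t => al * f t + be * g t) a b (al * Vf + be * Vg).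
Proof.
  intros Hf Hg.
  pose proof (is_RInt_plus _ _ _ _ _ _ (is_RInt_scal _ _ _ al _ Hf) (is_RInt_scal _ _ _ be _ Hg)) as H.
  exact H.
Qed.

Lemma c2 (t : R) : cos t ^ 2 = 1 - sin t ^ 2.
Proof. pose proof (sc1 t); lra. Qed.

Lemma Pzero_odd (j q : nat) : is_RInt (fun t => cos t ^ (2*j+1) * sin t ^ q) 0 (2*PI) 0.
Proof.
  apply (ext_R (fun t => cos t ^ (2*j+1) * sin t ^ q / (1 - 0 * sin t))).
  intros x. field. apply odd_zero. lra.
Qed.

Lemma P05 : is_RInt (fun t => cos t ^ 0 * sin t ^ 5) 0 (2*PI) 0.
Proof.
  eapply is_RInt_val. apply (ext_R (fun t => sin t ^ 5)). intros; simpl; ring.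
  apply Sv_ok. simpl. ring.
Qed.

Lemma P23 : is_RInt (fun t => cos t ^ 2 * sin t ^ 3) 0 (2*PI) 0.
Proof.
  eapply is_RInt_val.
  apply (ext_R (fun t => 1 * sin t ^ 3 + (-1) * sin t ^ 5)).
  intros x. rewrite c2. ring.
  apply lin; apply Sv_ok. simpl. ring.
Qed.

Lemma P41 : is_RInt (fun t => cos t ^ 4 * sin t ^ 1) 0 (2*PI) 0.
Proof.
  eapply is_RInt_val.
  apply (ext_R (fun t => 1 * sin t ^ 1 + 1 * ((-2) * sin t ^ 3 + 1 * sin t ^ 5))).
  intros x. replace (cos x ^ 4) with ((cos x ^ 2)^2) by ring. rewrite c2. ring.
  apply lin. apply Sv_ok. apply lin; apply Sv_ok. simpl. ring.
Qed.

Lemma D24 (rho : R) : 0 < rho < 1 ->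
  is_RInt (fun t => cos t ^ 2 * sin t ^ 4 / (1 - kk rho * sin t)) 0 (2*PI)
    (Dv rho 4 - Dv rho 6).
Proof.
  intros hr. eapply is_RInt_val.
  apply (ext_R (fun t => 1 * (sin t ^ 4 / (1 - kk rho * sin t)) + (-1) * (sin t ^ 6 / (1 - kk rho * sin t)))).
  intros x. pose proof (w_pos (kk rho) x ltac:(pose proof (kk_bound rho hr); lra)).
  rewrite c2. field. lra.
  apply lin; apply Dv_ok; exact hr. simpl; ring.
Qed.

Lemma D42 (rho : R) : 0 < rho < 1 ->
  is_RInt (fun t => cos t ^ 4 * sin t ^ 2 / (1 - kk rho * sin t)) 0 (2*PI)
    (Dv rho 2 - 2 * Dv rho 4 + Dv rho 6).
Proof.
  intros hr. eapply is_RInt_val.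
  apply (ext_R (fun t => 1 * (sin t ^ 2 / (1 - kk rho * sin t)) + 1 * ((-2) * (sin t ^ 4 / (1 - kk rho * sin t)) + 1 * (sin t ^ 6 / (1 - kk rho * sin t))))).
  intros x. pose proof (w_pos (kk rho) x ltac:(pose proof (kk_bound rho hr); lra)).
  replace (cos x ^ 4) with ((cos x ^ 2)^2) by ring. rewrite c2. field. lra.
  apply lin. apply Dv_ok; exact hr. apply lin; apply Dv_ok; exact hr. simpl; ring.
Qed.

Lemma D60 (rho : R) : 0 < rho < 1 ->
  is_RInt (fun t => cos t ^ 6 * sin t ^ 0 / (1 - kk rho * sin t)) 0 (2*PI)
    (Dv rho 0 - 3 * Dv rho 2 + 3 * Dv rho 4 - Dv rho 6).
Proof.
  intros hr. eapply is_RInt_val.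
  apply (ext_R (fun t => 1 * (sin t ^ 0 / (1 - kk rho * sin t)) + 1 * ((-3) * (sin t ^ 2 / (1 - kk rho * sin t)) + 1 * (3 * (sin t ^ 4 / (1 - kk rho * sin t)) + (-1) * (sin t ^ 6 / (1 - kk rho * sin t)))))).
  intros x. pose proof (w_pos (kk rho) x ltac:(pose proof (kk_bound rho hr); lra)).
  replace (cos x ^ 6) with ((cos x ^ 2)^3) by ring. rewrite c2. field. lra.
  apply lin. apply Dv_ok; exact hr. apply lin. apply Dv_ok; exact hr.
  apply lin; apply Dv_ok; exact hr. simpl; ring.
Qed.

Definition Ifun (a b : nat -> nat -> nat -> R) (lam1 z rho t : R) : R :=
  lam1 * z * (1 - kk rho * sin t)
  + z^4 * (cos t * quart a 1 (cos t) (sin t) + sin t * quart b 1 (cos t) (sin t))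
  - z^7 * cos t * (cos t * quart b 1 (cos t) (sin t) - sin t * quart a 1 (cos t) (sin t))
    / (1 - kk rho * sin t).

Lemma Iint (a b : nat -> nat -> nat -> R) (lam1 z rho : R) : 0 < rho < 1 ->
  is_RInt (Ifun a b lam1 z rho) 0 (2*PI)
   (lam1 * (z * (2*PI))
    + z^7 * (((a 1 1 3)%nat - (b 1 0 4)%nat) * (Dv rho 4 - Dv rho 6)
             + ((a 1 3 1)%nat - (b 1 2 2)%nat) * (Dv rho 2 - 2 * Dv rho 4 + Dv rho 6)
             - (b 1 4 0)%nat * (Dv rho 0 - 3 * Dv rho 2 + 3 * Dv rho 4 - Dv rho 6))).
Proof.
  intros hr.
  assert (hk : 0 <= kk rho < 1) by (pose proof (kk_bound rho hr); lra).
  set (w := fun t => 1 - kk rho * sin t).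
  assert (L := lin _ _ _ _ _ _ z (- z * kk rho) (proj1 (Sv_ok 0)) S1).
  assert (A0 := lin _ _ _ _ _ _ (z^4) (z^7) (Pzero_odd 0 4) (odd_zero 0 5 (kk rho) hk)).
  assert (A1 := lin _ _ _ _ _ _ (z^4) (z^7) P23 (D24 rho hr)).
  assert (A2 := lin _ _ _ _ _ _ (z^4) (z^7) (Pzero_odd 1 2) (odd_zero 1 3 (kk rho) hk)).
  assert (A3 := lin _ _ _ _ _ _ (z^4) (z^7) P41 (D42 rho hr)).
  assert (A4 := lin _ _ _ _ _ _ (z^4) (z^7) (Pzero_odd 2 0) (odd_zero 2 1 (kk rho) hk)).
  assert (B0 := lin _ _ _ _ _ _ (z^4) (- z^7) P05 (D24 rho hr)).
  assert (B1 := lin _ _ _ _ _ _ (z^4) (- z^7) (Pzero_odd 0 4) (odd_zero 1 3 (kk rho) hk)).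
  assert (B2 := lin _ _ _ _ _ _ (z^4) (- z^7) P23 (D42 rho hr)).
  assert (B3 := lin _ _ _ _ _ _ (z^4) (- z^7) (Pzero_odd 1 2) (odd_zero 2 1 (kk rho) hk)).
  assert (B4 := lin _ _ _ _ _ _ (z^4) (- z^7) P41 (D60 rho hr)).
  assert (T := lin _ _ _ _ _ _ lam1 1 L
   (lin _ _ _ _ _ _ (a 1 0 4)%nat 1 A0 (lin _ _ _ _ _ _ (a 1 1 3)%nat 1 A1
   (lin _ _ _ _ _ _ (a 1 2 2)%nat 1 A2 (lin _ _ _ _ _ _ (a 1 3 1)%nat 1 A3
   (lin _ _ _ _ _ _ (a 1 4 0)%nat 1 A4
   (lin _ _ _ _ _ _ (b 1 0 4)%nat 1 B0 (lin _ _ _ _ _ _ (b 1 1 3)%nat 1 B1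
   (lin _ _ _ _ _ _ (b 1 2 2)%nat 1 B2 (lin _ _ _ _ _ _ (b 1 3 1)%nat 1 B3
   (lin _ _ _ _ _ _ (b 1 4 0)%nat 0 B4 B4))))))))))).
  refine (is_RInt_val _ _ _ _ _ (ext_R _ _ _ _ _ _ T) _).
  - intros x. pose proof (w_pos (kk rho) x hk). unfold Ifun, quart. simpl. field. lra.
  - simpl. ring.
Qed.

Lemma F0_eq (a b : nat -> nat -> nat -> R) (lam : nat -> R) (th r : R) :
  0 < r -> F0 a b lam th r = r ^ 4 * cos th.
Proof.
  intros hr. unfold F0, drdth, Pf, Qf.
  pose proof (sc1 th) as H.
  set (c := cos th) in *. set (s := sin th) in *.
  set (qa := quart a 1 (r*c) (r*s)). set (qb := quart b 1 (r*c) (r*s)).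
  set (qa2 := quart a 2 (r*c) (r*s)). set (qb2 := quart b 2 (r*c) (r*s)).
  replace (c * (r * c + r * s * ((r * c) ^ 3 + r * c * (r * s) ^ 2) + 0 * (lam 1%nat * (r * s) + qb) + 0 ^ 2 * (lam 2%nat * (r * s) + qb2)) -
   s * (- (r * s) + r * c * ((r * c) ^ 3 + r * c * (r * s) ^ 2) + 0 * (lam 1%nat * (r * c) + qa) + 0 ^ 2 * (lam 2%nat * (r * c) + qa2)))
   with (r * (s^2 + c^2)) by ring.
  rewrite H. cbv zeta.
  replace (c * (- (r * s) + r * c * ((r * c) ^ 3 + r * c * (r * s) ^ 2) +
   0 * (lam 1%nat * (r * c) + qa) + 0 ^ 2 * (lam 2%nat * (r * c) + qa2)) +
  s * (r * c + r * s * ((r * c) ^ 3 + r * c * (r * s) ^ 2) +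
   0 * (lam 1%nat * (r * s) + qb) + 0 ^ 2 * (lam 2%nat * (r * s) + qb2)))
  with (r^4 * c * (s^2+c^2)^2) by ring.
  rewrite H. field. lra.
Qed.

Lemma eqR (x y : R) : x = y -> x = y.
Proof. auto. Qed.

Lemma quad_der (N0 N1 N2 D0 D1 D2 : R) : D0 <> 0 ->
  Derive (fun e => (N0 + e*N1 + e^2*N2)/(D0 + e*D1 + e^2*D2)) 0 = (N1*D0 - N0*D1)/D0^2.
Proof.
  intros h. apply is_derive_unique. auto_derive.
  - replace (D0 + 0*D1 + 0*(0*1)*D2) with D0 by ring. exact h.
  - field. exact h.
Qed.

Lemma F1_eq (a b : nat -> nat -> nat -> R) (lam : nat -> R) (th r : R) :
  0 < r -> F1 a b lam th r =
    lam 1%nat * r + cos th * quart a 1 (r * cos th) (r * sin th)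
    + sin th * quart b 1 (r * cos th) (r * sin th)
    - r^3 * cos th * (cos th * quart b 1 (r * cos th) (r * sin th)
                      - sin th * quart a 1 (r * cos th) (r * sin th)).
Proof.
  intros hr. unfold F1.
  pose proof (sc1 th) as H.
  set (c := cos th) in *. set (s := sin th) in *.
  set (qa := quart a 1 (r*c) (r*s)). set (qb := quart b 1 (r*c) (r*s)).
  set (qa2 := quart a 2 (r*c) (r*s)). set (qb2 := quart b 2 (r*c) (r*s)).
  set (P0 := - (r * s) + r * c * ((r * c) ^ 3 + r * c * (r * s) ^ 2)).
  set (Q0 := r * c + r * s * ((r * c) ^ 3 + r * c * (r * s) ^ 2)).
  set (p1 := lam 1%nat * (r * c) + qa). set (q1 := lam 1%nat * (r * s) + qb).
  set (p2 := lam 2%nat * (r * c) + qa2). set (q2 := lam 2%nat * (r * s) + qb2).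
  rewrite (Derive_ext _ (fun e => (r*(c*P0+s*Q0) + e*(r*(c*p1+s*q1)) + e^2*(r*(c*p2+s*q2)))
            /((c*Q0 - s*P0) + e*(c*q1 - s*p1) + e^2*(c*q2 - s*p2)))).
  2:{ intros e. unfold drdth, Pf, Qf. cbv zeta. fold c s qa qb qa2 qb2.
      fold P0 Q0 p1 q1 p2 q2. apply (f_equal2 Rdiv); ring. }
  assert (HD : c*Q0 - s*P0 = r).
  { unfold P0, Q0. transitivity (r*(s^2+c^2)). ring. rewrite H; ring. }
  assert (HN : r*(c*P0+s*Q0) = r^5 * c).
  { unfold P0, Q0. transitivity (r^5 * c * (s^2+c^2)^2). ring. rewrite H. ring. }
  rewrite quad_der by lra. rewrite HD, HN. unfold p1, q1. apply eqR. replace (lam 1%nat * r) with (lam 1%nat * r * (s^2+c^2)) by (rewrite H; ring). field. lra.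
Qed.

Lemma quart_hom (c : nat -> nat -> nat -> R) (k : nat) (r x y : R) :
  quart c k (r*x) (r*y) = r^4 * quart c k x y.
Proof. unfold quart. simpl. ring. Qed.

Lemma integrand_eq (a b : nat -> nat -> nat -> R) (lam : nat -> R) (z rho t : R) :
  0 < z -> 3 * z^3 < 1 -> 3 * z^3 = kk rho ->
  / Ysol t z * F1 a b lam t (rsol t z) = Ifun a b (lam 1%nat) z rho t.
Proof.
  intros hz hz3 hk.
  assert (hw : 0 < 1 - 3 * z^3 * sin t) by (apply w_pos; pose proof (pow_lt z 3 hz); lra).
  set (w := 1 - 3 * z^3 * sin t) in *.
  set (E := exp (- (1/3) * ln w)).
  assert (HE : 0 < E) by apply exp_pos.
  assert (HY : Ysol t z = E^4).
  { unfold Ysol, Rpower, E. fold w. simpl. rewrite Rmult_1_r, <- !exp_plus. apply f_equal. lra. }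
  assert (HW : w = / E^3).
  { unfold E. simpl. rewrite Rmult_1_r, <- !exp_plus. rewrite <- exp_Ropp.
    match goal with |- _ = exp ?u => replace u with (ln w) by field end.
    rewrite exp_ln; auto. }
  assert (Hr : rsol t z = z * E) by (unfold rsol, Rpower, E; fold w; reflexivity).
  rewrite F1_eq by (rewrite Hr; apply Rmult_lt_0_compat; auto).
  rewrite Hr, HY, !quart_hom.
  unfold Ifun. rewrite <- hk. fold w. rewrite HW. field. lra.
Qed.

Lemma f1_val (a b : nat -> nat -> nat -> R) (lam : nat -> R) (z rho : R) :
  0 < rho < 1 -> 0 < z -> 3 * z^3 = kk rho ->
  f1 a b lam z =
   (lam 1%nat * (z * (2*PI))
    + z^7 * (((a 1 1 3)%nat - (b 1 0 4)%nat) * (Dv rho 4 - Dv rho 6)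
             + ((a 1 3 1)%nat - (b 1 2 2)%nat) * (Dv rho 2 - 2 * Dv rho 4 + Dv rho 6)
             - (b 1 4 0)%nat * (Dv rho 0 - 3 * Dv rho 2 + 3 * Dv rho 4 - Dv rho 6))).
Proof.
  intros hr hz hk.
  assert (hz3 : 3 * z^3 < 1) by (rewrite hk; apply kk_bound, hr).
  unfold f1.
  assert (HY : Ysol (2*PI) z = 1).
  { unfold Ysol, Rpower. rewrite sin_2PI. replace (1 - 3 * z^3 * 0) with 1 by ring.
    rewrite ln_1, Rmult_0_r, exp_0. reflexivity. }
  rewrite HY, Rmult_1_l.
  rewrite (RInt_ext _ (Ifun a b (lam 1%nat) z rho)).
  2:{ intros x _. apply integrand_eq; auto. }
  apply is_RInt_unique. apply Iint. exact hr.
Qed.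

Ltac pos := repeat (apply Rmult_lt_0_compat || apply Rinv_0_lt_compat || apply exp_pos || apply pow_lt); try nra.

Lemma key_pow (s : R) : 0 < s < 1 ->
  Rpower 3 (2/3) * Rpower (1 - s) (1/3) / (Rpower (1 + s) (11/3) * Rpower (1 + s^2) (4/3))
  = 3 * zofs s / ((1+s)^4 * (1+s^2)).
Proof.
  intros hs. unfold zofs, Rpower.
  replace (1 - s^2) with ((1-s)*(1+s)) by ring.
  unfold Rdiv.
  apply ln_inv. pos. pos.
  repeat (rewrite ln_mult by pos || rewrite ln_Rinv by pos).
  rewrite !ln_exp.
  repeat (rewrite ln_mult by pos || rewrite ln_Rinv by pos).
  rewrite ln_Rinv by pos. rewrite ln_Rinv by pos. rewrite ln_Rinv by pos. repeat (rewrite ln_mult by pos). rewrite !ln_exp. rewrite !ln_pow by lra.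
  simpl INR. field.
Qed.

Lemma zofs_cube (s : R) : 0 < s < 1 -> zofs s ^ 3 = (1 - s^2) / (3 * (1 + s^2)).
Proof.
  intros hs. unfold zofs, Rpower.
  match goal with |- exp ?u ^ 3 = _ => replace (exp u ^ 3) with (exp u * (exp u * exp u)) by ring end.
  rewrite <- !exp_plus.
  match goal with |- exp ?u = _ => replace u with (ln ((1 - s^2) / (3 * (1 + s^2)))) by field end.
  apply exp_ln. apply Rdiv_lt_0_compat; nra.
Qed.

Lemma zofs_pos (s : R) : 0 < zofs s.
Proof. unfold zofs, Rpower. apply exp_pos. Qed.

Lemma final_eq (a b : nat -> nat -> nat -> R) (lam : nat -> R) (s : R) : 0 < s < 1 ->
     f1 a b lam (zofs s) =
       PI * Rpower 3 (2 / 3) * Rpower (1 - s) (1 / 3)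
       / (108 * Rpower (1 + s) (11 / 3) * Rpower (1 + s ^ 2) (4 / 3))
       * (N1 a b lam * s ^ 6 + N2 a b lam * s ^ 5 + N3 a b lam * s ^ 4
          + N4 a b lam * s ^ 3 + N3 a b lam * s ^ 2 + N2 a b lam * s
          + N1 a b lam).
Proof.
  intros hs.
  set (rho := (1 - s) / (1 + s)).
  assert (hr : 0 < rho < 1).
  { unfold rho. split. apply Rdiv_lt_0_compat; lra.
    apply Rmult_lt_reg_r with (1+s). lra. unfold Rdiv. rewrite Rmult_assoc, Rinv_l by lra. lra. }
  assert (hz3 := zofs_cube s hs).
  assert (hz := zofs_pos s).
  assert (hk : 3 * zofs s ^ 3 = kk rho).
  { rewrite hz3. unfold kk, rho. field. split; nra. }
  rewrite (f1_val a b lam (zofs s) rho hr hz hk).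
  replace (PI * Rpower 3 (2 / 3) * Rpower (1 - s) (1 / 3)
       / (108 * Rpower (1 + s) (11 / 3) * Rpower (1 + s ^ 2) (4 / 3)))
    with (PI / 108 * (Rpower 3 (2 / 3) * Rpower (1 - s) (1 / 3)
       / (Rpower (1 + s) (11 / 3) * Rpower (1 + s ^ 2) (4 / 3)))).
  2:{ field. split; unfold Rpower; apply Rgt_not_eq, exp_pos. }
  rewrite key_pow by exact hs.
  replace (zofs s ^ 7) with (zofs s * (zofs s ^ 3)^2) by ring.
  rewrite hz3.
  unfold N1, N2, N3, N4, rho, kk. simpl Dv. simpl Sv. simpl INR.
  unfold kk. field. repeat split; nra.
Qed.

Lemma cube_lt (x y : R) : 0 <= x -> x < y -> x^3 < y^3.
Proof. intros h1 h2. assert (0 < y) by lra. assert (0 <= x*x) by nra. assert (0 < y*y) by nra. assert (x*x < y*y) by nra. simpl. nra. Qed.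

Lemma cube_inj (x y : R) : 0 < x -> 0 < y -> x^3 = y^3 -> x = y.
Proof.
  intros hx hy h. destruct (Rtotal_order x y) as [H|[H|H]]; auto.
  - pose proof (cube_lt x y ltac:(lra) H). lra.
  - pose proof (cube_lt y x ltac:(lra) H). lra.
Qed.

Lemma cube_lt_inv (x y : R) : 0 < x -> 0 < y -> x^3 < y^3 -> x < y.
Proof.
  intros hx hy h. destruct (Rlt_or_le x y) as [H|H]; auto.
  destruct (Rle_lt_or_eq_dec y x H) as [H'|H'].
  - pose proof (cube_lt y x ltac:(lra) H'). lra.
  - subst. lra.
Qed.

Lemma zmax_cube : zmax ^ 3 = / 3.
Proof.
  unfold zmax, Rpower.
  match goal with |- exp ?u ^ 3 = _ => replace (exp u ^ 3) with (exp u * (exp u * exp u)) by ring end.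
  rewrite <- !exp_plus.
  match goal with |- exp ?u = _ => replace u with (- ln 3) by field end.
  rewrite exp_Ropp, exp_ln; lra.
Qed.

Lemma zmax_pos : 0 < zmax.
Proof. unfold zmax, Rpower. apply exp_pos. Qed.

Lemma Rpower1 (x : R) : Rpower 1 x = 1.
Proof. unfold Rpower. rewrite ln_1, Rmult_0_r, exp_0. reflexivity. Qed.

Lemma rsol_part (a b : nat -> nat -> nat -> R) (lam : nat -> R) (z : R) : 0 < z < zmax ->
     rsol 0 z = z /\
     (forall th : R, is_derive (fun t => rsol t z) th (F0 a b lam th (rsol th z))) /\
     (forall th : R, 0 < rsol th z) /\
     (forall th : R, rsol (th + 2 * PI) z = rsol th z).
Proof.
  intros [hz hzm].
  assert (hz3 : 3 * z^3 < 1).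
  { pose proof (cube_lt z zmax ltac:(lra) hzm). rewrite zmax_cube in H. lra. }
  assert (hz3' : 0 <= 3 * z^3 < 1) by (pose proof (pow_lt z 3 hz); lra).
  assert (Hpos : forall th, 0 < rsol th z).
  { intro th. unfold rsol, Rpower. apply Rmult_lt_0_compat; [lra | apply exp_pos]. }
  split; [| split; [| split]].
  - unfold rsol. rewrite sin_0. replace (1 - 3 * z^3 * 0) with 1 by ring.
    rewrite Rpower1. ring.
  - intro th. rewrite F0_eq by apply Hpos.
    pose proof (w_pos (3*z^3) th hz3') as hw.
    unfold rsol, Rpower.
    set (w := 1 - 3 * z^3 * sin th) in *.
    assert (HW : w = / exp (- (1 / 3) * ln w)^3).
    { match goal with |- _ = / ?e ^ 3 => replace (e ^ 3) with (e * (e * e)) by ring end.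
      rewrite <- !exp_plus, <- exp_Ropp.
      match goal with |- _ = exp ?u => replace u with (ln w) by field end.
      rewrite exp_ln; auto. }
    auto_derive.
    + pose proof (w_pos (3*z^3) th hz3'). lra.
    + replace (1 + - (3 * (z * (z * (z * 1))) * sin th)) with w by (unfold w; ring).
      set (E := exp (- (1 / 3) * ln w)) in *.
      assert (HE : 0 < E) by apply exp_pos.
      rewrite HW. field. lra.
  - exact Hpos.
  - intro th. unfold rsol. rewrite sin_plus, sin_2PI, cos_2PI.
    replace (sin th * 1 + cos th * 0) with (sin th) by ring. reflexivity.
Qed.

Lemma zofs_range (s : R) : 0 < s < 1 -> 0 < zofs s < zmax.
Proof.
  intros hs. split. apply zofs_pos.
  apply cube_lt_inv. apply zofs_pos. apply zmax_pos.
  rewrite zofs_cube, zmax_cube by exact hs.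
  apply Rmult_lt_reg_r with (3 * (1 + s^2)). nra.
  unfold Rdiv. rewrite Rmult_assoc, Rinv_l by nra. field_simplify. nra.
Qed.

Lemma zofs_bij (z : R) : 0 < z < zmax -> exists! s : R, 0 < s < 1 /\ zofs s = z.
Proof.
  intros [hz hzm].
  assert (ht : 3 * z^3 < 1).
  { pose proof (cube_lt z zmax ltac:(lra) hzm). rewrite zmax_cube in H. lra. }
  assert (ht0 : 0 < z^3) by (apply pow_lt; lra).
  set (t := z^3) in *.
  assert (hq : 0 < (1 - 3*t)/(1 + 3*t)) by (apply Rdiv_lt_0_compat; lra).
  set (s := sqrt ((1 - 3*t)/(1 + 3*t))).
  assert (hs2 : s^2 = (1 - 3*t)/(1 + 3*t)).
  { unfold s. simpl. rewrite Rmult_1_r. apply sqrt_sqrt. lra. }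
  assert (hs0 : 0 < s) by (apply sqrt_lt_R0; exact hq).
  assert (hs1 : s < 1).
  { assert (s^2 < 1).
    { rewrite hs2. apply Rmult_lt_reg_r with (1+3*t). lra.
      unfold Rdiv. rewrite Rmult_assoc, Rinv_l by lra. lra. }
    nra. }
  assert (Hcube : forall s', 0 < s' < 1 -> zofs s' = z -> s'^2 = s^2).
  { intros s' hs' e. pose proof (zofs_cube s' hs') as h. rewrite e in h. fold t in h.
    rewrite hs2, h. field. nra. }
  exists s. split.
  - split. lra. apply cube_inj. apply zofs_pos. lra.
    rewrite zofs_cube by lra. fold t.
    replace (s^2) with ((1 - 3*t)/(1 + 3*t)) by (symmetry; exact hs2). field. lra.
  - intros s' [hs' e]. pose proof (Hcube s' hs' e). nra.
Qed.

Theorem mainTheorem7 (a b : nat -> nat -> nat -> R) (lam : nat -> R) :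
  (forall th r : R, 0 < r -> F0 a b lam th r = r ^ 4 * cos th) /\
  (forall z : R, 0 < z < zmax ->
     rsol 0 z = z /\
     (forall th : R, is_derive (fun t => rsol t z) th (F0 a b lam th (rsol th z))) /\
     (forall th : R, 0 < rsol th z) /\
     (forall th : R, rsol (th + 2 * PI) z = rsol th z)) /\
  (forall s : R, 0 < s < 1 -> 0 < zofs s < zmax) /\
  (forall z : R, 0 < z < zmax -> exists! s : R, 0 < s < 1 /\ zofs s = z) /\
  (forall s : R, 0 < s < 1 ->
     f1 a b lam (zofs s) =
       PI * Rpower 3 (2 / 3) * Rpower (1 - s) (1 / 3)
       / (108 * Rpower (1 + s) (11 / 3) * Rpower (1 + s ^ 2) (4 / 3))
       * (N1 a b lam * s ^ 6 + N2 a b lam * s ^ 5 + N3 a b lam * s ^ 4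
          + N4 a b lam * s ^ 3 + N3 a b lam * s ^ 2 + N2 a b lam * s
          + N1 a b lam)).
Proof.
  split; [| split; [| split; [| split]]].
  - intros th r hr. apply F0_eq, hr.
  - intros z hz. apply rsol_part, hz.
  - exact zofs_range.
  - exact zofs_bij.
  - intros s hs. apply final_eq, hs.
Qed.
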